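(* Let $\alpha\geq 1$ be a real number. If a connected $(n,m)$-graph $G$ has maximum value of $Pl_\alpha$ among all connected $(n,m)$-graphs, then the maximum vertex degree in $G$ is $n-1$.
   Context: All graphs are finite, simple, undirected and connected; an $(n,m)$-graph has $n$ vertices and $m$ edges. The general Platt index is $Pl_\alpha(G)=\sum_{uv\in E(G)}(d_u+d_v-2)^\alpha$, where $d_u$ is the degree of vertex $u$. *)

(* Defs.v *)
From Stdlib Require Import Reals.
From mathcomp Require Import all_boot.

Set Implicit Arguments.
Unset Strict Implicit.
Unset Printing Implicit Defensive.

Definition simple_graph (n : nat) (e : rel 'I_n) : Prop :=
  (forall u v, e u v = e v u) /\ (forall u, e u u = false).

(* Connected: every two vertices are joined by a path (n >= 1 required separately). *)
Definition connected_graph (n : nat) (e : rel 'I_n) : Prop :=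
  forall u v, connect e u v.

Definition deg (n : nat) (e : rel 'I_n) (u : 'I_n) : nat := #|[set v | e u v]|.

Definition edges (n : nat) (e : rel 'I_n) : {set 'I_n * 'I_n} :=
  [set p : 'I_n * 'I_n | (p.1 < p.2)%N && e p.1 p.2].

Definition num_edges (n : nat) (e : rel 'I_n) : nat := #|edges e|.

(* Real power x^a for x >= 0, with the convention 0^a = 0 (a >= 1 here). *)
Definition rpow (x a : R) : R := if Req_EM_T x R0 then R0 else Rpower x a.

Definition platt (alpha : R) (n : nat) (e : rel 'I_n) : R :=
  \big[Rplus/R0]_(p in edges e)
     rpow (INR (deg e p.1 + deg e p.2 - 2)%N) alpha.

(* Main.v *)
From HB Require Import structures.
Require Import Defs.
From Stdlib Require Import Reals Lra Lia.
From mathcomp Require Import all_boot zify.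

HB.instance Definition _ := Monoid.isComLaw.Build R R0 Rplus (fun a b c => esym (Rplus_assoc a b c)) Rplus_comm Rplus_0_l.

Lemma dsum_edges (T : Type) (idx : T) (op : Monoid.com_law idx) n (e : rel 'I_n)
  (g : 'I_n -> 'I_n -> T) :
  simple_graph e -> (forall a b, g a b = g b a) ->
  \big[op/idx]_a \big[op/idx]_b (if e a b then g a b else idx) =
  op (\big[op/idx]_(p in edges e) g p.1 p.2) (\big[op/idx]_(p in edges e) g p.1 p.2).
Proof.
move=> [Hs Hi] Hg.
rewrite pair_bigA /=.
rewrite -(big_mkcond (fun p : 'I_n * 'I_n => e p.1 p.2)) /=.
rewrite (bigID (fun p : 'I_n * 'I_n => (p.1 < p.2)%N)) /=.
congr (op _ _).
  by apply: eq_bigl => p; rewrite inE andbC.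
rewrite (reindex_inj (h := fun p : 'I_n * 'I_n => (p.2, p.1))) /=; last first.
  by move=> [a b] [c d] /= [-> ->].
apply: eq_big => [[a b]|[a b] _] /=; last exact: Hg.
rewrite inE /= Hs.
case: (eqVneq a b) => [->|Hab]; first by rewrite Hi andbF.
by rewrite -leqNgt leq_eqVlt -[(a : nat) == b]/(a == b) (negbTE Hab) /= andbC.
Qed.

Open Scope R_scope.
Lemma rpow_pos x a : 0 < x -> rpow x a = Rpower x a.
Proof. intros H; unfold rpow; destruct (Req_dec_T x R0); simpl. lra. auto. Qed.
Lemma rpow_0 x a : x = 0 -> rpow x a = 0.
Proof. intros ->. unfold rpow; destruct (Req_dec_T 0 R0); simpl; [auto|lra]. Qed.
Lemma rpow_ge0 x a : 0 <= rpow x a.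
Proof. unfold rpow; destruct (Req_dec_T x R0); simpl; [lra|]. unfold Rpower; left; apply exp_pos. Qed.

Lemma rpow_le x y a : 0 <= a -> 0 <= x <= y -> rpow x a <= rpow y a.
Proof.
intros Ha [Hx Hxy]. destruct Hx as [Hx| <-].
- rewrite !rpow_pos; try lra. apply Rle_Rpower_l; lra.
- rewrite (rpow_0 _ _ (erefl _)); apply rpow_ge0.
Qed.

Lemma rpow_lt x y a : 0 < a -> 0 <= x < y -> rpow x a < rpow y a.
Proof.
intros Ha [Hx Hxy]. destruct Hx as [Hx| <-].
- rewrite !rpow_pos; try lra. apply Rlt_Rpower_l; lra.
- rewrite (rpow_0 _ _ (erefl _)) (rpow_pos _ _ Hxy). unfold Rpower; apply exp_pos.
Qed.

Lemma rpow_conv (s : nat) a : 1 <= a ->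
  rpow (INR s.+1) a - rpow (INR s) a <= rpow (INR s.+2) a - rpow (INR s.+1) a.
Proof.
intros Ha. destruct s as [|s].
- simpl INR. rewrite (rpow_0 _ _ (erefl _)) !rpow_pos; try lra.
  replace (Rpower 1 a) with 1 by (unfold Rpower; rewrite ln_1 Rmult_0_r exp_0; auto).
  assert (Rpower (1+1) 1 <= Rpower (1+1) a) by (apply Rle_Rpower; lra).
  rewrite Rpower_1 in H; lra.
- set (f := fun x => Rpower x a).
  set (f' := fun x => a * Rpower x (a - 1)).
  assert (Hs : 0 < INR s.+1) by (apply lt_0_INR; lia).
  assert (E1 : INR s.+2 = INR s.+1 + 1) by (rewrite S_INR; auto).
  assert (E2 : INR s.+3 = INR s.+2 + 1) by (rewrite S_INR; auto).
  rewrite !rpow_pos; try lra.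
  destruct (MVT_cor2 f f' (INR s.+1) (INR s.+2)) as [c1 [Hc1 Ic1]]; [lra| |].
  { intros c Hc. apply derivable_pt_lim_power. lra. }
  destruct (MVT_cor2 f f' (INR s.+2) (INR s.+3)) as [c2 [Hc2 Ic2]]; [lra| |].
  { intros c Hc. apply derivable_pt_lim_power. lra. }
  unfold f in Hc1, Hc2. rewrite Hc1 Hc2. unfold f'.
  assert (D1 : INR s.+2 - INR s.+1 = 1) by lra.
  assert (D2 : INR s.+3 - INR s.+2 = 1) by lra.
  rewrite D1 D2.
  assert (Rpower c1 (a-1) <= Rpower c2 (a-1)) by (apply Rle_Rpower_l; lra).
  nra.
Qed.

Definition h (a : R) (t : nat) : R := rpow (INR (t - 2)) a.

Lemma h_mono a t t' : 0 <= a -> (t <= t')%N -> h a t <= h a t'.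
Proof.
move=> Ha Ht; apply: rpow_le => //; split; first exact: pos_INR.
apply: le_INR; apply/leP; exact: leq_sub2r.
Qed.

Lemma h_lt a t t' : 0 < a -> (2 <= t)%N -> (t < t')%N -> h a t < h a t'.
Proof.
move=> Ha H2 Ht; apply: rpow_lt => //; split; first exact: pos_INR.
apply: lt_INR; apply/ltP. rewrite ltn_sub2r //. exact: leq_trans Ht.
Qed.

Lemma h_inc a t : 1 <= a -> h a t.+1 - h a t <= h a t.+2 - h a t.+1.
Proof.
move=> Ha; rewrite /h.
case: t => [|[|s]].
- rewrite /= !(rpow_0 _ _ (erefl _)). lra.
- have -> : (1 - 2 = 0)%N by []. have -> : (2 - 2 = 0)%N by []. 
  rewrite /= !(rpow_0 _ _ (erefl _)).
  have := rpow_ge0 (INR 1) a. simpl. lra.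
- have -> : (s.+2 - 2 = s)%N by rewrite subSS subSS subn0.
  have -> : (s.+3 - 2 = s.+1)%N by rewrite subSS subSS subn0.
  have -> : (s.+4 - 2 = s.+2)%N by rewrite subSS subSS subn0.
  exact: rpow_conv.
Qed.

Lemma h_inc_gen a i j : 1 <= a -> (i <= j)%N -> h a i.+1 - h a i <= h a j.+1 - h a j.
Proof.
move=> Ha; elim: j => [|j IH].
  by rewrite leqn0 => /eqP ->; lra.
rewrite leq_eqVlt => /orP [/eqP -> | Hij]; first lra.
have := IH Hij; have := h_inc a j Ha; lra.
Qed.

Lemma h_conv_k a A B k : 1 <= a -> (k <= B)%N -> (B <= A)%N ->
  h a A + h a B <= h a (A + k) + h a (B - k).
Proof.
move=> Ha; elim: k => [|k IH] HkB HBA.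
  rewrite addn0 subn0; lra.
have IH' := IH (ltnW HkB) HBA.
have E : (B - k = (B - k.+1).+1)%N by rewrite subnS prednK // subn_gt0.
have := h_inc_gen a (B - k.+1) (A + k) Ha (leq_trans (leq_subr _ _) (leq_trans HBA (leq_addr _ _))).
rewrite -E addnS; lra.
Qed.

Lemma h_conv a A B A' B' : 1 <= a -> (B' <= B)%N -> (B <= A)%N -> (A <= A')%N ->
  (A + B <= A' + B')%N -> h a A + h a B <= h a A' + h a B'.
Proof.
move=> Ha H1 H2 H3 H4.
have := h_conv_k a A B (B - B') Ha (leq_subr _ _) H2.
rewrite subKn //.
have : h a (A + (B - B')) <= h a A'.
  apply: h_mono; first lra.
  lia.
lra.
Qed.

Close Scope R_scope.
Section Kel.
Variable n : nat.
Variable e : rel 'I_n.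
Variables u x : 'I_n.
Hypothesis Hs : forall a b, e a b = e b a.
Hypothesis Hi : forall a, e a a = false.
Hypothesis Hux : e u x.

Definition kel : rel 'I_n := fun a b =>
  if a == u then (b != u) && (e u b || e x b)
  else if b == u then e u a || e x a
  else if a == x then e x b && e u b
  else if b == x then e x a && e u a
  else e a b.

Lemma xu : x != u.
Proof. by apply/eqP => E; move: Hux; rewrite E Hi. Qed.

Lemma kel_sym a b : kel a b = kel b a.
Proof.
have Hxu := xu.
rewrite /kel.
case: (boolP (a == u)) => [/eqP Ea|Hau]; case: (boolP (b == u)) => [/eqP Eb|Hbu] //=.
case: (boolP (a == x)) => [/eqP Ea|Hax]; case: (boolP (b == x)) => [/eqP Eb|Hbx] //=.
by rewrite Ea Eb.
Qed.

Lemma kel_irr a : kel a a = false.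
Proof.
rewrite /kel; case: (boolP (a == u)) => [_|Hau] /=; first by [].
case: (boolP (a == x)) => [/eqP ->|Hax]; first by rewrite Hi.
by rewrite Hi.
Qed.

Lemma kel_edge a b : e a b -> kel a b || (kel a u && kel u b).
Proof.
have Hxu := xu.
move=> Hab; rewrite /kel.
case: (boolP (a == u)) => [/eqP Ea|Hau] /=.
  move: Hab; rewrite Ea => Hab; rewrite Hab /= andbT.
  by apply/orP; left; apply/eqP => Eb; move: Hab; rewrite Eb Hi.
case: (boolP (b == u)) => [/eqP Eb|Hbu] /=.
  by move: Hab; rewrite Eb Hs => ->.
rewrite eqxx /=.
case: (boolP (a == x)) => [/eqP Ea|Hax] /=.
  by subst a; rewrite Hab Hux /= !orbT.
case: (boolP (b == x)) => [/eqP Eb|Hbx] /=.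
  by subst b; rewrite [e x a]Hs Hab Hux /= !orbT.
by rewrite Hab.
Qed.

Lemma kel_conn : connected_graph e -> connected_graph kel.
Proof.
move=> C a b; apply: (connect_sub _ (C a b)) => c d Hcd.
case/orP: (kel_edge _ _ Hcd) => [H|/andP [H1 H2]]; first exact: connect1.
exact: (connect_trans (connect1 H1) (connect1 H2)).
Qed.

Let N (r : rel 'I_n) v := [set w | r v w].

Lemma NkelU : N kel u = (N e u :|: N e x) :\ u.
Proof. by apply/setP => v; rewrite !inE /kel eqxx. Qed.

Lemma NkelX : N kel x = u |: (N e u :&: N e x).
Proof.
apply/setP => v; rewrite !inE /kel (negbTE xu).
case: (boolP (v == u)) => [/eqP ->|Hvu] /=; first by rewrite Hux.
by rewrite eqxx andbC.
Qed.

Lemma Nkel_other b : b != u -> b != x ->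
  N kel b = if e x b && ~~ e u b then u |: (N e b :\ x) else N e b.
Proof.
move=> Hbu Hbx.
case: ifP => [/andP [Hxb Hub]|Hno]; apply/setP => v; rewrite !inE /kel (negbTE Hbu) (negbTE Hbx).
  case: (boolP (v == u)) => [/eqP Ev|Hvu] /=; first by subst v; rewrite Hxb orbT.
  case: (boolP (v == x)) => [/eqP Ev|Hvx] /=; first by subst v; rewrite (negbTE Hub) andbF.
  by [].
case: (boolP (v == u)) => [/eqP Ev|Hvu] /=.
  by subst v; move: Hno; rewrite [e b u]Hs; case: (e u b); case: (e x b).
case: (boolP (v == x)) => [/eqP Ev|Hvx] /=.
  by subst v; move: Hno; rewrite [e b x]Hs; case: (e u b); case: (e x b).
by [].
Qed.

Lemma deg_other b : b != u -> b != x -> deg kel b = deg e b.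
Proof.
move=> Hbu Hbx; rewrite /deg -/(N kel b) -/(N e b) Nkel_other //.
case: ifP => // /andP [Hxb Hub].
rewrite cardsU1 [in RHS](cardsD1 x) !inE -(Hs x b) Hxb (Hs b u) (negbTE Hub) andbF.
by [].
Qed.

Lemma deg_sum : (deg kel u + deg kel x = deg e u + deg e x)%N.
Proof.
rewrite /deg -/(N kel u) -/(N kel x) -/(N e u) -/(N e x) NkelU NkelX.
have H1 := cardsD1 u (N e u :|: N e x).
have H2 := cardsU1 u (N e u :&: N e x).
have H3 := cardsUI (N e u) (N e x).
rewrite !inE Hi Hs Hux /= in H1 H2.
rewrite H2 -H3 H1 addnA [(_ + 1)%N]addnC; exact: erefl.
Qed.

Lemma deg_x_le : (deg kel x <= deg e x)%N.
Proof.
rewrite /deg -/(N kel x) -/(N e x) NkelX; apply: subset_leq_card.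
apply/subsetP => v; rewrite !inE => /orP [/eqP ->|/andP [_ ->]] //.
by rewrite Hs.
Qed.

Variable z : 'I_n.
Hypothesis Hxz : e x z.
Hypothesis Huz : e u z = false.
Hypothesis Hzu : z != u.

Lemma deg_u_lt : (deg e u < deg kel u)%N.
Proof.
rewrite /deg -/(N kel u) -/(N e u) NkelU.
have H1 : #|z |: N e u| = (#|N e u|).+1 by rewrite cardsU1 inE Huz.
rewrite -H1; apply: subset_leq_card; apply/subsetP => v; rewrite !inE.
case/orP => [/eqP ->|Huv]; first by rewrite Hzu Hxz orbT.
by rewrite Huv andbT; apply/eqP => E; move: Huv; rewrite E Hi.
Qed.

End Kel.

Open Scope R_scope.
Set Implicit Arguments. Unset Strict Implicit.
Definition F a n (r : rel 'I_n) i j : R := if r i j then h a (deg r i + deg r j)%N else R0.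
Definition W a n (r : rel 'I_n) : R := \big[Rplus/R0]_i \big[Rplus/R0]_j F a r i j.

Lemma F_sym a n (r : rel 'I_n) i j : (forall a b, r a b = r b a) -> F a r i j = F a r j i.
Proof. by move=> Hs; rewrite /F Hs addnC. Qed.

Lemma W_platt a n (r : rel 'I_n) : simple_graph r -> W a r = platt a r + platt a r.
Proof.
move=> Hg; rewrite /W /F /platt.
apply: (@dsum_edges R R0 Rplus n r (fun i j => h a (deg r i + deg r j)%N) Hg).
by move=> i j; rewrite addnC.
Qed.

Lemma edges_deg n (r : rel 'I_n) : simple_graph r ->
  (num_edges r + num_edges r = \sum_i deg r i)%N.
Proof.
move=> Hg; rewrite /num_edges -sum1_card.
rewrite -(@dsum_edges nat 0%N addn n r (fun _ _ => 1%N) Hg) //.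
apply: eq_bigr => i _; rewrite /deg -sum1_card big_mkcond /=.
rewrite [RHS]big_mkcond /=; apply: eq_bigr => j _; by rewrite inE; case: (r i j).
Qed.

Lemma sum_le (I : finType) (P : pred I) (f g : I -> R) :
  (forall i, P i -> f i <= g i) ->
  \big[Rplus/R0]_(i | P i) f i <= \big[Rplus/R0]_(i | P i) g i.
Proof.
move=> H; apply: (big_ind2 (fun s t => s <= t)) => //; first lra.
by move=> *; lra.
Qed.

Section Main.
Variable alpha : R.
Hypothesis Ha : 1 <= alpha.
Variable n : nat.
Variable e : rel 'I_n.
Variables u x z : 'I_n.
Hypothesis Hs : forall a b, e a b = e b a.
Hypothesis Hi : forall a, e a a = false.
Hypothesis Hux : e u x.
Hypothesis Hxz : e x z.
Hypothesis Huz : e u z = false.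
Hypothesis Hzu : z != u.
Hypothesis Hmax : forall j, (deg e j <= deg e u)%N.

Let K := kel n e u x.

Lemma KS a b : K a b = K b a.
Proof. by apply: kel_sym. Qed.

Lemma Kdo b : b != u -> b != x -> deg K b = deg e b.
Proof. by apply: deg_other. Qed.

Lemma Ksum : (deg K u + deg K x = deg e u + deg e x)%N.
Proof. by apply: deg_sum. Qed.

Lemma Kxle : (deg K x <= deg e x)%N.
Proof. by apply: deg_x_le. Qed.

Lemma Kult : (deg e u < deg K u)%N.
Proof. exact: (deg_u_lt _ _ _ _ Hi _ Hxz Huz Hzu). Qed.

Lemma Kub b : b != u -> K u b = e u b || e x b.
Proof. by move=> Hbu; rewrite /K /kel eqxx Hbu. Qed.

Lemma Kxb b : b != u -> b != x -> K x b = e x b && e u b.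
Proof. by move=> Hbu Hbx; rewrite /K /kel (negbTE (xu _ _ _ _ Hi Hux)) (negbTE Hbu) eqxx. Qed.

Lemma Kab a b : a != u -> a != x -> b != u -> b != x -> K a b = e a b.
Proof. by move=> H1 H2 H3 H4; rewrite /K /kel (negbTE H1) (negbTE H2) (negbTE H3) (negbTE H4). Qed.

Lemma KI a : K a a = false.
Proof. exact: (kel_irr n e u x Hi a). Qed.

Lemma Kxu : K x u.
Proof. by rewrite KS Kub ?Hux // (xu _ _ _ _ Hi Hux). Qed.

Lemma degx_pos : (1 <= deg e x)%N.
Proof. by apply/card_gt0P; exists u; rewrite inE Hs. Qed.

Lemma col b : F alpha e u b + F alpha e x b <= F alpha K u b + F alpha K x b.
Proof.
have Hxu := xu _ _ _ _ Hi Hux.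
have h0 : 0 <= alpha by lra.
have HS := Ksum.
case: (boolP (b == u)) => [/eqP Eb|Hbu].
  subst b; rewrite /F Hi KI Kxu Hs Hux.
  have := h_mono alpha (deg e x + deg e u) (deg K x + deg K u) h0.
  have Hle : (deg e x + deg e u <= deg K x + deg K u)%N by lia.
  move=> /(_ Hle); lra.
case: (boolP (b == x)) => [/eqP Eb|Hbx].
  subst b; rewrite /F Hi KI KS Kxu Hux.
  have := h_mono alpha (deg e u + deg e x) (deg K u + deg K x) h0.
  have Hle : (deg e u + deg e x <= deg K u + deg K x)%N by lia.
  move=> /(_ Hle); lra.
rewrite /F Kub // Kxb // [deg K b]Kdo //.
have Hm := Hmax x. have Hl := Kult. have Hx := Kxle.
case Eub: (e u b); case Exb: (e x b) => /=.
- apply: h_conv => //; lia.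
- have := h_mono alpha (deg e u + deg e b) (deg K u + deg e b) h0; move=> H.
  have : (deg e u + deg e b <= deg K u + deg e b)%N by lia.
  move=> /H; lra.
- have := h_mono alpha (deg e x + deg e b) (deg K u + deg e b) h0; move=> H.
  have : (deg e x + deg e b <= deg K u + deg e b)%N by lia.
  move=> /H; lra.
- lra.
Qed.

Lemma col_z : F alpha e u z + F alpha e x z < F alpha K u z + F alpha K x z.
Proof.
have Hxu := xu _ _ _ _ Hi Hux.
have Hzx : z != x by apply/eqP => E; move: Hxz; rewrite E Hi.
rewrite /F Kub // Kxb // [deg K z]Kdo // Huz Hxz /=.
have Hm := Hmax x. have Hl := Kult. have Hdx := degx_pos.
have Hdz : (1 <= deg e z)%N by apply/card_gt0P; exists x; rewrite inE Hs.
have := @h_lt alpha (deg e x + deg e z) (deg K u + deg e z) (Rlt_le_trans _ _ _ Rlt_0_1 Ha).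
move=> H; have : (2 <= deg e x + deg e z)%N by lia.
move=> /H H'; have : (deg e x + deg e z < deg K u + deg e z)%N by lia.
move=> /H'; lra.
Qed.


Lemma W_split (r : rel 'I_n) : W alpha r =
  \big[Rplus/R0]_b (F alpha r u b + F alpha r x b) +
  \big[Rplus/R0]_(a | (a != u) && (a != x)) \big[Rplus/R0]_b F alpha r a b.
Proof.
have Hxu := xu _ _ _ _ Hi Hux.
rewrite /W (bigD1 u) // (bigD1 x) //= big_split /= Rplus_assoc. by [].
Qed.

Lemma row_split (r : rel 'I_n) a : \big[Rplus/R0]_b F alpha r a b =
  F alpha r a u + (F alpha r a x +
  \big[Rplus/R0]_(b | (b != u) && (b != x)) F alpha r a b).
Proof.
have Hxu := xu _ _ _ _ Hi Hux.
by rewrite (bigD1 u) // (bigD1 x) //=.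
Qed.

Lemma row_le a : a != u -> a != x ->
  \big[Rplus/R0]_b F alpha e a b <= \big[Rplus/R0]_b F alpha K a b.
Proof.
move=> Hau Hax.
rewrite !row_split -!Rplus_assoc.
rewrite [F alpha e a u]F_sym // [F alpha e a x]F_sym //.
rewrite [F alpha K a u]F_sym; last exact: KS.
rewrite [F alpha K a x]F_sym; last exact: KS.
apply: Rplus_le_compat; first exact: col.
apply: Req_le; apply: eq_bigr => b /andP [Hbu Hbx].
by rewrite /F Kab // [deg K a]Kdo // [deg K b]Kdo.
Qed.

Lemma W_lt : W alpha e < W alpha K.
Proof.
have Hzx : z != x by apply/eqP => E; move: Hxz; rewrite E Hi.
rewrite !W_split; apply: Rplus_lt_le_compat.
  rewrite (bigD1 z) // [X in _ < X](bigD1 z) //=.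
  apply: Rplus_lt_le_compat; first exact: col_z.
  by apply: sum_le => b _; apply: col.
by apply: sum_le => a /andP [Hau Hax]; apply: row_le.
Qed.

Lemma degsum_K : (\sum_i deg K i = \sum_i deg e i)%N.
Proof.
have Hxu := xu _ _ _ _ Hi Hux.
have E : forall f : 'I_n -> nat, (\sum_i f i = f u + (f x + \sum_(i | (i != u) && (i != x)) f i))%N.
  by move=> f; rewrite (bigD1 u) // (bigD1 x) //=.
rewrite E [RHS]E !addnA Ksum.
congr (_ + _)%N; apply: eq_bigr => i /andP [Hiu Hix].
by rewrite Kdo.
Qed.

End Main.


Close Scope R_scope.
Theorem corollary4 (alpha : R) (n m : nat) (e : rel 'I_n) :
  Rle R1 alpha ->
  (0 < n)%N ->
  simple_graph e -> connected_graph e -> num_edges e = m ->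
  (forall e' : rel 'I_n,
     simple_graph e' -> connected_graph e' -> num_edges e' = m ->
     Rle (platt alpha e') (platt alpha e)) ->
  exists u : 'I_n, deg e u = n.-1.
Proof.
move=> Ha Hn Hg C Hm Hopt.
have [Hs Hi] := Hg.
pose i0 : 'I_n := Ordinal Hn.
case: (@arg_maxnP _ i0 xpredT (deg e) isT) => u _ Hu.
case: (eqVneq (deg e u) n.-1) => [Hd|Hd]; first by exists u.
exfalso.
have Hle : (deg e u <= n.-1)%N.
  have <- : #|[set~ u]| = n.-1 by rewrite cardsC1 card_ord.
  rewrite /deg; apply: subset_leq_card.
  by apply/subsetP => v; rewrite !inE => Huv; apply/eqP => E; move: Huv; rewrite E Hi.
have : ~~ ([set: 'I_n] \subset u |: [set v | e u v]).
  apply/negP => Hsub; have := subset_leq_card Hsub.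
  rewrite cardsT card_ord cardsU1 inE Hi /= => H.
  have H' : (n <= 1 + deg e u)%N := H. lia.
case/subsetPn => w _; rewrite !inE negb_or => /andP [Hwu Huw].
have [x [z [H1 [H2 [H3 H4]]]]] : exists x z, e u x /\ e x z /\ e u z = false /\ z != u.
  case: (boolP [exists x, exists z, e u x && e x z && ~~ e u z && (z != u)]).
    case/existsP => x /existsP [z /andP [/andP [/andP [A B] D] E]].
    by exists x, z; rewrite (negbTE D).
  rewrite negb_exists => /forallP Hno.
  pose Cset := u |: [set v | e u v].
  have step : forall a b, e a b -> a \in Cset -> b \in Cset.
    move=> a b Hab; rewrite !inE => /orP [/eqP Ea|Hua].
      by subst a; rewrite Hab orbT.
    case: (boolP (b == u)) => //= Hbu.
    case: (boolP (e u b)) => // Hub.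
    have := Hno a; rewrite negb_exists => /forallP /(_ b).
    by rewrite Hua Hab Hub Hbu.
  have Hcl : closed e (mem Cset).
    move=> a b Hab; apply/idP/idP; first exact: step.
    by apply: step; rewrite Hs.
  have := closed_connect Hcl (C u w).
  by rewrite !inE eqxx /= (negbTE Hwu) (negbTE Huw).
have Hg' : simple_graph (kel n e u x).
  split; [exact: kel_sym | exact: kel_irr].
have C' : connected_graph (kel n e u x) by apply: kel_conn.
have Hm' : num_edges (kel n e u x) = m.
  have E1 := edges_deg Hg'. have E2 := edges_deg Hg.
  rewrite (degsum_K Hs Hi H1) in E1.
  rewrite -Hm; lia.
have := Hopt _ Hg' C' Hm'.
have := W_lt Ha Hs Hi H1 H2 H3 H4 (fun j => Hu j isT).
rewrite !W_platt //.
lra.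
Qed.
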